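(* Let $(\mathbb{C},\mathcal{N})$ be a star-regular category, $\kappa\colon F^*\rightrightarrows A$ a kernel star with coequaliser $f\colon A\to A/F^*$, and $m\colon M\to A$ a monomorphism. Put $J:=F^*\,\underline{\vee}_A\,M$ (a subobject of $A$). Then $(F^*\cap(M\times M))^*\rightrightarrows M$ and $(F^*\cap(J\times J))^*\rightrightarrows J$ are kernel stars, and their quotients satisfy $$\frac{M}{(F^*\cap(M\times M))^*}\;\cong\;\frac{J}{(F^*\cap(J\times J))^*},$$ both being isomorphic, as subobjects of $A/F^*$, to the regular image $f(M)$.
   Context: Throughout, $\mathbb{C}$ is a finitely complete regular category with an ideal of morphisms $\mathcal{N}$ (a class such that $gf\in\mathcal{N}$ whenever $f\in\mathcal{N}$ or $g\in\mathcal{N}$). A star on $X$ is a pair of parallel morphisms $\tau=(\tau_1,\tau_2)\colon T\rightrightarrows X$ with $\tau_1\in\mathcal{N}$; monic if jointly monic. An $\mathcal{N}$-kernel of $f\colon X\to Y$ is a morphism $k$ into $X$ with $fk\in\mathcal{N}$, universal with this property. For a relation $\rho=(\rho_1,\rho_2)\colon R\rightrightarrows X$, $\rho^*=(\rho_1k,\rho_2k)\colon R^*\rightrightarrows X$ with $k$ the $\mathcal{N}$-kernel of $\rho_1$. The kernel star of $f\colon X\to Y$ (denoted by the capital letter, $F^*$) is $Eq(f)^*$ for $Eq(f)$ the kernel pair of $f$; a kernel star on $X$ is the kernel star of some morphism with domain $X$. A star-regular category is a regular multi-pointed category with $\mathcal{N}$-kernels in which every regular epimorphism is a coequaliser of some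 star; there every kernel star $F^*$ on $A$ has a coequaliser $A\to A/F^*$, and $X/S$ denotes the codomain of the coequaliser of a star $S$ on $X$. For a monomorphism $n\colon N\to A$ and a star $\sigma\colon S\rightrightarrows A$, $(S\cap(N\times N))^*$ denotes the star on $N$ obtained by pulling back $\langle\sigma_1,\sigma_2\rangle\colon S\to A\times A$ along $n\times n$ and applying $(-)^*$. Asymmetric join: for a kernel star $F^*$ on $A$ with coequaliser $f$ and a monomorphism $m\colon M\to A$, $F^*\,\underline{\vee}_A\,M:=f^{-1}(f(M))$, the pullback along $f$ of the regular image $f(M)\to A/F^*$ of $fm$; it is a subobject of $A$ through which $m$ factors. *)

(* Defs.v *)
(* All limit/colimit notions are stated by their universal properties
   (relationally), so every construction is determined only up to iso,
   exactly as in the paper. *)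
Set Implicit Arguments.
Unset Strict Implicit.

Record Cat := {
  Ob :> Type;
  Hom : Ob -> Ob -> Type;
  idm : forall a, Hom a a;
  comp : forall a b c : Ob, Hom b c -> Hom a b -> Hom a c;
  comp_assoc : forall a b c d (h : Hom c d) (g : Hom b c) (f : Hom a b),
      comp h (comp g f) = comp (comp h g) f;
  comp_id_l : forall a b (f : Hom a b), comp (idm b) f = f;
  comp_id_r : forall a b (f : Hom a b), comp f (idm a) = f
}.

Arguments idm {c} a : rename.
Arguments comp {c a b c0} _ _ : rename.
Arguments Hom {c} _ _ : rename.

Declare Scope cat_scope.
Notation "g ∘ f" := (comp g f) (at level 40, left associativity) : cat_scope.
Open Scope cat_scope.

Definition MorClass (C : Cat) := forall X Y : C, @Hom C X Y -> Prop.

Section Defs.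
Variable C : Cat.

Definition mono (X Y : C) (m : Hom X Y) : Prop :=
  forall Z (x y : Hom Z X), m ∘ x = m ∘ y -> x = y.

Definition iso (X Y : C) (f : Hom X Y) : Prop :=
  exists g : Hom Y X, g ∘ f = idm X /\ f ∘ g = idm Y.

Definition is_terminal (T : C) : Prop :=
  forall X : C, exists! u : Hom X T, True.

Definition is_pullback (X Y Z P : C) (f : Hom X Z) (g : Hom Y Z)
  (p1 : Hom P X) (p2 : Hom P Y) : Prop :=
  f ∘ p1 = g ∘ p2 /\
  forall Q (q1 : Hom Q X) (q2 : Hom Q Y), f ∘ q1 = g ∘ q2 ->
    exists! u : Hom Q P, p1 ∘ u = q1 /\ p2 ∘ u = q2.

Definition finitely_complete : Prop :=
  (exists T : C, is_terminal T) /\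
  forall (X Y Z : C) (f : Hom X Z) (g : Hom Y Z),
    exists P (p1 : Hom P X) (p2 : Hom P Y), is_pullback f g p1 p2.

Definition is_coequalizer (S X Q : C) (t1 t2 : Hom S X) (q : Hom X Q) : Prop :=
  q ∘ t1 = q ∘ t2 /\
  forall Z (h : Hom X Z), h ∘ t1 = h ∘ t2 -> exists! u : Hom Q Z, u ∘ q = h.

Definition regular_epi (X Q : C) (q : Hom X Q) : Prop :=
  exists S (t1 t2 : Hom S X), is_coequalizer t1 t2 q.

Definition regular_cat : Prop :=
  finitely_complete /\
  (forall (X Y R : C) (f : Hom X Y) (p1 p2 : Hom R X),
      is_pullback f f p1 p2 -> exists Q (q : Hom X Q), is_coequalizer p1 p2 q) /\
  (forall (X Y Z P : C) (f : Hom X Z) (g : Hom Y Z) (p1 : Hom P X) (p2 : Hom P Y),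
      regular_epi f -> is_pullback f g p1 p2 -> regular_epi p2).

Variable N : MorClass C.

Definition is_ideal : Prop :=
  forall (X Y Z : C) (f : Hom X Y) (g : Hom Y Z), N f \/ N g -> N (g ∘ f).

Definition is_Nkernel (X Y K : C) (f : Hom X Y) (k : Hom K X) : Prop :=
  N (f ∘ k) /\
  forall Z (g : Hom Z X), N (f ∘ g) -> exists! u : Hom Z K, k ∘ u = g.

Definition has_Nkernels : Prop :=
  forall (X Y : C) (f : Hom X Y), exists K (k : Hom K X), is_Nkernel f k.

Definition is_star (T X : C) (t1 t2 : Hom T X) : Prop := N t1.

Definition star_regular : Prop :=
  regular_cat /\ is_ideal /\ has_Nkernels /\
  forall (X Q : C) (q : Hom X Q), regular_epi q ->
    exists S (t1 t2 : Hom S X), is_star t1 t2 /\ is_coequalizer t1 t2 q.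

(* (s1, s2) : S => X is (a realisation of) the kernel star F^* = Eq(f)^*
   of f : X -> Y: (p1,p2) a kernel pair of f, k an N-kernel of p1. *)
Definition is_kernel_star (X Y S : C) (f : Hom X Y) (s1 s2 : Hom S X) : Prop :=
  exists R (p1 p2 : Hom R X) (k : Hom S R),
    is_pullback f f p1 p2 /\ is_Nkernel p1 k /\ s1 = p1 ∘ k /\ s2 = p2 ∘ k.

Definition is_kernel_star_on (X S : C) (s1 s2 : Hom S X) : Prop :=
  exists Y (f : Hom X Y), is_kernel_star f s1 s2.

(* (t1, t2) : T => M is (a realisation of) (S ∩ (M×M))^* for a mono
   n : M -> A and a star (s1, s2) : S => A: pull back <s1,s2> : S -> A×A
   along n×n (expressed by its universal property: a cone (q, a1, a2) with
   s1 q = n a1, s2 q = n a2, universal), then apply (-)^*, i.e. precompose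
   with an N-kernel k of a1. *)
Definition is_restricted_star (M A S T : C) (n : Hom M A) (s1 s2 : Hom S A)
  (t1 t2 : Hom T M) : Prop :=
  exists P (q : Hom P S) (a1 a2 : Hom P M) (k : Hom T P),
    (s1 ∘ q = n ∘ a1 /\ s2 ∘ q = n ∘ a2 /\
     forall Q (q' : Hom Q S) (b1 b2 : Hom Q M),
       s1 ∘ q' = n ∘ b1 -> s2 ∘ q' = n ∘ b2 ->
       exists! u : Hom Q P, q ∘ u = q' /\ a1 ∘ u = b1 /\ a2 ∘ u = b2) /\
    is_Nkernel a1 k /\ t1 = a1 ∘ k /\ t2 = a2 ∘ k.

End Defs.

(* Main.v *)
Require Import Defs.
Set Implicit Arguments.
Unset Strict Implicit.

Ltac ra := repeat rewrite <- comp_assoc.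
Ltac raH H := repeat rewrite <- comp_assoc in H.

Lemma eq_post (C : Cat) (A B B' D X : C) (a : Hom B D) (b : Hom A B) (c : Hom B' D) (d : Hom A B')
  (x : Hom X A) : a ∘ b = c ∘ d -> a ∘ (b ∘ x) = c ∘ (d ∘ x).
Proof. intros E. rewrite !comp_assoc, E. reflexivity. Qed.

Definition KS (C : Cat) (N : MorClass C) (X Y T : C) (h : Hom X Y) (t1 t2 : Hom T X) : Prop :=
  h ∘ t1 = h ∘ t2 /\ N _ _ t1 /\
  forall Z (x y : Hom Z X), h ∘ x = h ∘ y -> N _ _ x ->
    exists w : Hom Z T, t1 ∘ w = x /\ t2 ∘ w = y.

Definition JM (C : Cat) (X X' T : C) (t1 : Hom T X) (t2 : Hom T X') : Prop :=
  forall Z (w w' : Hom Z T), t1 ∘ w = t1 ∘ w' -> t2 ∘ w = t2 ∘ w' -> w = w'.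

Lemma Nker_mono (C : Cat) (N : MorClass C) (HI : is_ideal N) (X Y K : C)
  (f : Hom X Y) (k : Hom K X) : is_Nkernel N f k ->
  forall Z (a b : Hom Z K), k ∘ a = k ∘ b -> a = b.
Proof.
  intros [Hn Hu] Z a b E.
  assert (Na : N _ _ (f ∘ (k ∘ a))).
  { rewrite comp_assoc. apply HI. right. exact Hn. }
  destruct (Hu Z (k ∘ a) Na) as [u [_ Hun]].
  transitivity u; [symmetry|]; apply Hun; auto.
Qed.

Lemma pb_jm (C : Cat) (X Y Z P : C) (f : Hom X Z) (g : Hom Y Z) (p1 : Hom P X) (p2 : Hom P Y) :
  is_pullback f g p1 p2 -> JM p1 p2.
Proof.
  intros [Hc Hu] Q a b E1 E2.
  assert (Hq : f ∘ (p1 ∘ a) = g ∘ (p2 ∘ a)) by (apply eq_post; exact Hc).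
  destruct (Hu Q _ _ Hq) as [u [_ Hun]].
  transitivity u; [symmetry|]; apply Hun; auto.
Qed.

Lemma kstar_props (C : Cat) (N : MorClass C) (HI : is_ideal N) (A Y Fs : C)
  (g : Hom A Y) (k1 k2 : Hom Fs A) :
  is_kernel_star N g k1 k2 -> KS N g k1 k2 /\ JM k1 k2.
Proof.
  intros [R [p1 [p2 [k [HR [HK [E1 E2]]]]]]]. subst k1 k2.
  pose proof HR as [Hc Hu]. pose proof HK as [Hn Hku].
  split; [split; [|split]|].
  - apply eq_post. exact Hc.
  - exact Hn.
  - intros Z x y Exy Nx.
    destruct (Hu Z x y Exy) as [r [[R1 R2] _]].
    assert (Nr : N _ _ (p1 ∘ r)) by (rewrite R1; exact Nx).
    destruct (Hku Z r Nr) as [s [Hs _]].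
    exists s. split; [rewrite <- comp_assoc, Hs; exact R1 | rewrite <- comp_assoc, Hs; exact R2].
  - intros Z w w' H1 H2. apply (Nker_mono HI HK).
    apply (pb_jm HR); rewrite !comp_assoc; assumption.
Qed.

Lemma restr_props (C : Cat) (N : MorClass C) (HI : is_ideal N) (A Y Fs M T : C)
  (g : Hom A Y) (k1 k2 : Hom Fs A) (n : Hom M A) (t1 t2 : Hom T M) :
  KS N g k1 k2 -> JM k1 k2 -> is_restricted_star N n k1 k2 t1 t2 ->
  KS N (g ∘ n) t1 t2 /\ JM t1 t2 /\
  exists s0 : Hom T Fs, n ∘ t1 = k1 ∘ s0 /\ n ∘ t2 = k2 ∘ s0.
Proof.
  intros [Kc [Kn Kf]] Kj [P [q [a1 [a2 [k [[Q1 [Q2 Qu]] [HK [E1 E2]]]]]]]].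
  subst t1 t2. pose proof HK as [Hn Hku].
  assert (S1 : n ∘ (a1 ∘ k) = k1 ∘ (q ∘ k)) by (symmetry; apply eq_post; exact Q1).
  assert (S2 : n ∘ (a2 ∘ k) = k2 ∘ (q ∘ k)) by (symmetry; apply eq_post; exact Q2).
  split; [split; [|split]|split].
  - ra. rewrite S1, S2. rewrite !comp_assoc, Kc. reflexivity.
  - exact Hn.
  - intros Z x y Exy Nx. raH Exy.
    assert (Nnx : N _ _ (n ∘ x)) by (apply HI; left; exact Nx).
    destruct (Kf Z _ _ Exy Nnx) as [s [Hs1 Hs2]].
    assert (C1 : k1 ∘ s = n ∘ x) by exact Hs1.
    destruct (Qu Z s x y Hs1 Hs2) as [u [[U1 [U2 U3]] _]].
    assert (Nu : N _ _ (a1 ∘ u)) by (rewrite U2; exact Nx).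
    destruct (Hku Z u Nu) as [w [Hw _]].
    exists w. split; rewrite <- comp_assoc, Hw; assumption.
  - intros Z w w' H1 H2. apply (Nker_mono HI HK).
    assert (Hq : q ∘ (k ∘ w) = q ∘ (k ∘ w')).
    { apply Kj.
      - ra. rewrite !(comp_assoc q k), !(comp_assoc k1 (q ∘ k)), <- S1. ra. raH H1. rewrite H1. reflexivity.
      - ra. rewrite !(comp_assoc q k), !(comp_assoc k2 (q ∘ k)), <- S2. ra. raH H2. rewrite H2. reflexivity. }
    assert (B1 : k1 ∘ (q ∘ (k ∘ w)) = n ∘ (a1 ∘ (k ∘ w))) by (apply eq_post; exact Q1).
    assert (B2 : k2 ∘ (q ∘ (k ∘ w)) = n ∘ (a2 ∘ (k ∘ w))) by (apply eq_post; exact Q2).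
    destruct (Qu Z _ _ _ B1 B2) as [u [_ Hun]].
    transitivity u; [symmetry|]; apply Hun; [repeat split; reflexivity|].
    raH H1. raH H2. rewrite Hq, H1, H2. repeat split; reflexivity.
  - exists (q ∘ k). split; assumption.
Qed.

Lemma KS_kernel_star (C : Cat) (N : MorClass C) (HC : star_regular N) (X Y T : C)
  (h : Hom X Y) (t1 t2 : Hom T X) : KS N h t1 t2 -> JM t1 t2 -> is_kernel_star N h t1 t2.
Proof.
  intros [Kc [Kn Kf]] Kj.
  destruct HC as [[[_ Hpb] _] _].
  destruct (Hpb _ _ _ h h) as [R [r1 [r2 HR]]].
  pose proof HR as [Rc Ru].
  destruct (Ru T t1 t2 Kc) as [k [[K1 K2] _]].
  exists R, r1, r2, k. split; [exact HR|]. split; [|split; symmetry; assumption].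
  split; [rewrite K1; exact Kn|].
  intros Z z Nz.
  assert (Ez : h ∘ (r1 ∘ z) = h ∘ (r2 ∘ z)) by (apply eq_post; exact Rc).
  destruct (Kf Z _ _ Ez Nz) as [w [W1 W2]].
  exists w. split.
  - apply (pb_jm HR); rewrite comp_assoc; [rewrite K1|rewrite K2]; assumption.
  - intros w' Hw'. apply Kj.
    + rewrite W1, <- Hw', <- K1. ra. reflexivity.
    + rewrite W2, <- Hw', <- K2. ra. reflexivity.
Qed.

Lemma coeq_of_KS (C : Cat) (N : MorClass C) (HC : star_regular N) (X Q T : C)
  (e : Hom X Q) (t1 t2 : Hom T X) : regular_epi e -> KS N e t1 t2 -> is_coequalizer t1 t2 e.
Proof.
  intros He [Kc [Kn Kf]].
  destruct HC as [_ [_ [_ Hsr]]].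
  destruct (Hsr _ _ e He) as [S [s1 [s2 [Hs [Sc Su]]]]].
  split; [exact Kc|].
  intros Z h Hh. apply Su.
  destruct (Kf S s1 s2 Sc Hs) as [w [W1 W2]].
  rewrite <- W1, <- W2, !comp_assoc, Hh. reflexivity.
Qed.

Lemma coeq_iso (C : Cat) (X Q Q' T : C) (t1 t2 : Hom T X) (q : Hom X Q) (e : Hom X Q') :
  is_coequalizer t1 t2 q -> is_coequalizer t1 t2 e ->
  exists a : Hom Q Q', a ∘ q = e /\ iso a.
Proof.
  intros [qc qu] [ec eu].
  destruct (qu _ e ec) as [a [Ha _]].
  destruct (eu _ q qc) as [b [Hb _]].
  exists a. split; [exact Ha|]. exists b. split.
  - destruct (qu _ q qc) as [u [_ Hu]].
    transitivity u; [symmetry|]; apply Hu.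
    + rewrite <- comp_assoc, Ha. exact Hb.
    + apply comp_id_l.
  - destruct (eu _ e ec) as [u [_ Hu]].
    transitivity u; [symmetry|]; apply Hu.
    + rewrite <- comp_assoc, Hb. exact Ha.
    + apply comp_id_l.
Qed.

Lemma KS_img (C : Cat) (N : MorClass C) (A Y Fs M T AF I : C) (g : Hom A Y) (h : Hom AF Y)
  (f : Hom A AF) (k1 k2 : Hom Fs A) (n : Hom M A) (t1 t2 : Hom T M) (e : Hom M I) (i : Hom I AF) :
  KS N (g ∘ n) t1 t2 -> (exists s0 : Hom T Fs, n ∘ t1 = k1 ∘ s0 /\ n ∘ t2 = k2 ∘ s0) ->
  f ∘ k1 = f ∘ k2 -> g = h ∘ f -> mono i -> i ∘ e = f ∘ n -> KS N e t1 t2.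
Proof.
  intros [Kc [Kn Kf]] [s0 [S1 S2]] Fc Hg Hi Hie.
  split; [|split; [exact Kn|]].
  - apply Hi. rewrite !comp_assoc, Hie. ra. rewrite S1, S2, !comp_assoc, Fc. reflexivity.
  - intros Z x y Exy Nx. apply Kf; [|exact Nx].
    rewrite Hg. ra. rewrite !(comp_assoc f n), <- Hie. ra. rewrite Exy. reflexivity.
Qed.

Theorem proposition2p9 (C : Cat) (N : MorClass C) (HC : star_regular N)
  (A Y Fs : C) (g : Hom A Y) (k1 k2 : Hom Fs A) (Hk : is_kernel_star N g k1 k2)
  (AF : C) (f : Hom A AF) (Hf : is_coequalizer k1 k2 f)
  (M : C) (m : Hom M A) (Hm : mono m)
  (I : C) (e : Hom M I) (i : Hom I AF)
  (He : regular_epi e) (Hi : mono i) (Hie : i ∘ e = f ∘ m)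
  (J : C) (j : Hom J A) (p : Hom J I) (HJ : is_pullback f i j p)
  (TM : C) (t1 t2 : Hom TM M) (Ht : is_restricted_star N m k1 k2 t1 t2)
  (TJ : C) (u1 u2 : Hom TJ J) (Hu : is_restricted_star N j k1 k2 u1 u2) :
  is_kernel_star_on N t1 t2 /\ is_kernel_star_on N u1 u2 /\
  (exists QM (qM : Hom M QM), is_coequalizer t1 t2 qM) /\
  (exists QJ (qJ : Hom J QJ), is_coequalizer u1 u2 qJ) /\
  forall (QM QJ : C) (qM : Hom M QM) (qJ : Hom J QJ),
    is_coequalizer t1 t2 qM -> is_coequalizer u1 u2 qJ ->
    exists (alpha : Hom QM I) (beta : Hom QJ I) (gamma : Hom QM QJ) (m' : Hom M J),
      iso alpha /\ iso beta /\ iso gamma /\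
      i ∘ alpha ∘ qM = f ∘ m /\ i ∘ beta ∘ qJ = f ∘ j /\
      j ∘ m' = m /\ gamma ∘ qM = qJ ∘ m' /\ beta ∘ gamma = alpha.
Proof.
  pose proof HC as [[_ [_ Hstab]] [HI _]].
  destruct (kstar_props HI Hk) as [KSg JMg].
  destruct (restr_props HI KSg JMg Ht) as [KSm [JMm Sm]].
  destruct (restr_props HI KSg JMg Hu) as [KSj [JMj Sj]].
  pose proof Hf as [Fc Fu].
  destruct (Fu Y g (proj1 KSg)) as [h [Hh _]].
  pose proof HJ as [Jc Ju].
  assert (Hp : regular_epi p).
  { apply (Hstab _ _ _ _ f i j p); [exists Fs, k1, k2; exact Hf | exact HJ]. }
  assert (KSe : KS N e t1 t2) by (eapply KS_img; eauto).
  assert (KSp : KS N p u1 u2) by (eapply KS_img; eauto).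
  assert (Ce : is_coequalizer t1 t2 e) by (eapply coeq_of_KS; eauto).
  assert (Cp : is_coequalizer u1 u2 p) by (eapply coeq_of_KS; eauto).
  split; [exists Y, (g ∘ m); apply KS_kernel_star; assumption|].
  split; [exists Y, (g ∘ j); apply KS_kernel_star; assumption|].
  split; [exists I, e; exact Ce|].
  split; [exists I, p; exact Cp|].
  intros QM QJ qM qJ CM CJ.
  destruct (coeq_iso CM Ce) as [alpha [Ha Ia]].
  destruct (coeq_iso CJ Cp) as [beta [Hb Ib]].
  destruct (Ju M m e (eq_sym Hie)) as [m' [[M1 M2] _]].
  pose proof CM as [cMc cMu].
  pose proof CJ as [cJc cJu].
  assert (Hg : qJ ∘ m' ∘ t1 = qJ ∘ m' ∘ t2).
  { destruct KSj as [_ [_ Kf]].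
    destruct KSm as [Kc [Kn _]].
    assert (E : g ∘ j ∘ (m' ∘ t1) = g ∘ j ∘ (m' ∘ t2)).
    { ra. rewrite !(comp_assoc j m'), M1. ra. raH Kc. exact Kc. }
    assert (Nm : N _ _ (m' ∘ t1)) by (apply HI; left; exact Kn).
    destruct (Kf _ _ _ E Nm) as [w [W1 W2]].
    ra. rewrite <- W1, <- W2. rewrite !(comp_assoc qJ), cJc. reflexivity. }
  destruct (cMu _ _ Hg) as [gamma [Hgam _]].
  assert (Hbg : beta ∘ gamma = alpha).
  { destruct (cMu _ e (proj1 Ce)) as [u [_ Hun]].
    transitivity u; [symmetry|]; apply Hun.
    - rewrite <- comp_assoc, Hgam, comp_assoc, Hb. exact M2.
    - exact Ha. }
  exists alpha, beta, gamma, m'.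
  split; [exact Ia|]. split; [exact Ib|]. split.
  - destruct Ia as [a' [A1 A2]]. destruct Ib as [b' [B1 B2]].
    exists (a' ∘ beta). split.
    + ra. rewrite Hbg. exact A1.
    + assert (Gm : gamma = b' ∘ alpha).
      { rewrite <- Hbg, comp_assoc, B1, comp_id_l. reflexivity. }
      rewrite Gm. ra. rewrite (comp_assoc alpha a'), A2, comp_id_l. exact B1.
  - split; [ra; rewrite Ha; exact Hie|].
    split; [ra; rewrite Hb; symmetry; exact Jc|].
    split; [exact M1|]. split; [exact Hgam|exact Hbg].
Qed.
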